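(* (i) For all $\nu,\mu_0,\mu_1\in\mathsf{BW}(\mathbb R^d)$, letting $T_0$ (resp. $T_1$) be the optimal transport map from $\nu$ to $\mu_0$ (resp. $\mu_1$), $$\mathcal H(\mu_0)+\langle\nabla_{\mathsf{BW}}\mathcal H(\mu_0)\circ T_0,\,T_1-T_0\rangle_\nu\le\mathcal H(\mu_1);$$ in particular (taking $\nu=\mu_0$) $\mathcal H(\mu_0)+\langle\nabla_{\mathsf{BW}}\mathcal H(\mu_0),T-\mathrm{id}\rangle_{\mu_0}\le\mathcal H(\mu_1)$ with $T$ the optimal map from $\mu_0$ to $\mu_1$, i.e. $\mathcal H$ is geodesically convex on $\mathsf{BW}(\mathbb R^d)$. (ii) For $\eta>0$ and $\mu=\mathcal N(m,\Sigma)\in\mathsf{BW}(\mathbb R^d)$, the minimizer over $\nu\in\mathsf{BW}(\mathbb R^d)$ of $\eta\mathcal H(\nu)+\frac12W_2^2(\mu,\nu)$ is $\mathcal N(m,\Sigma_1)$ with $$\Sigma_1=\tfrac12\big(\Sigma+2\eta I+[\Sigma(\Sigma+4\eta I)]^{1/2}\big).$$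
   Context: $\mathsf{BW}(\mathbb R^d)$ is the set of Gaussian distributions $\mathcal N(m,\Sigma)$ on $\mathbb R^d$ with $\Sigma$ symmetric positive definite, endowed with the 2-Wasserstein distance $W_2$; for $\mu$ write $m_\mu,\Sigma_\mu$ for mean and covariance, $\langle f,g\rangle_\mu=\int\langle f(x),g(x)\rangle d\mu(x)$. Between two elements of $\mathsf{BW}(\mathbb R^d)$ the optimal transport map (for $W_2$) is unique and affine with symmetric PSD linear part. Entropy $\mathcal H(\mu)=\int\log\mu(x)\,d\mu(x)$ (identifying $\mu$ with its Lebesgue density), and its BW gradient is $\nabla_{\mathsf{BW}}\mathcal H(\mu)(x)=-\Sigma_\mu^{-1}(x-m_\mu)$. The matrix square root is the principal PSD root ($\Sigma$ and $\Sigma+4\eta I$ commute). *)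

(* Defs.v *)
From HB Require Import structures.
From mathcomp Require Import all_boot all_order all_algebra.
From mathcomp Require Import all_classical all_reals all_analysis.
Set Implicit Arguments. Unset Strict Implicit. Unset Printing Implicit Defensive.
Import Order.TTheory GRing.Theory Num.Theory.
Local Open Scope ring_scope.

Section BW.
Variable R : realType.

Definition dotv {d : nat} (u v : 'cV[R]_d) : R := (u^T *m v) 0 0.

Definition symmx {d : nat} (S : 'M[R]_d) : Prop := S^T = S.
Definition psdmx {d : nat} (S : 'M[R]_d) : Prop :=
  symmx S /\ forall v : 'cV[R]_d, 0 <= dotv v (S *m v).
Definition spdmx {d : nat} (S : 'M[R]_d) : Prop :=
  symmx S /\ forall v : 'cV[R]_d, v != 0 -> 0 < dotv v (S *m v).

Definition psd_sqrt {d : nat} (A : 'M[R]_d) : 'M[R]_d :=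
  xget 0 [set S : 'M[R]_d | psdmx S /\ S *m S = A].

(* A Gaussian N(m, Sigma) on R^d is represented by its parameters (m, Sigma). *)
Definition gauss (d : nat) : Type := ('cV[R]_d * 'M[R]_d)%type.
Definition gmean {d : nat} (mu : gauss d) : 'cV[R]_d := mu.1.
Definition gcov {d : nat} (mu : gauss d) : 'M[R]_d := mu.2.
Definition inBW {d : nat} (mu : gauss d) : Prop := spdmx (gcov mu).

Definition affmap (d : nat) : Type := ('M[R]_d * 'cV[R]_d)%type.
Definition aff_app {d : nat} (f : affmap d) (x : 'cV[R]_d) : 'cV[R]_d :=
  f.1 *m x + f.2.
Definition aff_id (d : nat) : affmap d := (1%:M, 0).
Definition aff_comp {d : nat} (f g : affmap d) : affmap d :=
  (f.1 *m g.1, f.1 *m g.2 + f.2).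
Definition aff_sub {d : nat} (f g : affmap d) : affmap d :=
  (f.1 - g.1, f.2 - g.2).

(* <f, g>_nu = int <f(x), g(x)> dnu(x) for affine f, g and nu = N(m, Sigma):
   since f(x) = f(m) + F (x - m), this equals
   <f(m), g(m)> + E[(x-m)^T F^T G (x-m)] = <f(m), g(m)> + tr(F^T G Sigma). *)
Definition gauss_inner {d : nat} (nu : gauss d) (f g : affmap d) : R :=
  dotv (aff_app f (gmean nu)) (aff_app g (gmean nu))
  + \tr (f.1^T *m g.1 *m gcov nu).

(* Optimal transport map from nu to mu between elements of BW(R^d): the
   (unique) affine map with symmetric PSD linear part pushing nu forward to mu;
   the pushforward of N(m, S) by x |-> A x + b is N(A m + b, A S A^T). *)
Definition is_ot_map {d : nat} (nu mu : gauss d) (T : affmap d) : Prop :=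
  psdmx T.1 /\ T.1 *m gcov nu *m T.1^T = gcov mu
  /\ aff_app T (gmean nu) = gmean mu.
Definition ot_map {d : nat} (nu mu : gauss d) : affmap d :=
  xget (aff_id d) [set T | is_ot_map nu mu T].

(* W_2^2(mu, nu) = int |T(x) - x|^2 dmu(x), T the optimal map from mu to nu. *)
Definition W2sq {d : nat} (mu nu : gauss d) : R :=
  let D := aff_sub (ot_map mu nu) (aff_id d) in gauss_inner mu D D.

(* Entropy H(mu) = int log mu dmu of N(m, Sigma) on R^d
   (= - (1/2) log det (2 pi e Sigma)). *)
Definition entropy {d : nat} (mu : gauss d) : R :=
  - (d%:R / 2) * (ln (2 * pi) + 1) - (1 / 2) * ln (\det (gcov mu)).

Definition gradH {d : nat} (mu : gauss d) : affmap d :=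
  (- invmx (gcov mu), invmx (gcov mu) *m gmean mu).

End BW.

(* Main.v *)
Require Import Defs.
From HB Require Import structures.
From mathcomp Require Import all_boot all_order all_algebra.
From mathcomp Require Import all_classical all_reals all_analysis.
From mathcomp Require Import complex.
From mathcomp Require Import lra.
Import Order.TTheory GRing.Theory Num.Theory.
Local Open Scope ring_scope.
Set Implicit Arguments. Unset Strict Implicit.

Lemma sym_annih (R : rcfType) n (A : 'M[R]_n.+1) : A^T = A ->
  exists2 rs : seq R, uniq rs & horner_mx A (\prod_(r <- rs) ('X - r%:P)) = 0.
Proof.
move=> symA.
pose f := real_complex R.
pose AC := map_mx f A.
have hAC : AC \is hermsymmx.
  apply: realsym_hermsym.
    rewrite qualifE /AC expr0 scale1r; apply/eqP/matrixP => i j.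
    by rewrite !mxE /= -[A in RHS]symA mxE.
  apply/mxOverP => i j; rewrite /AC mxE; apply/complex_realP; by exists (A i j).
have /orthomx_spectralP eAC := hermitian_normalmx hAC.
have spR := hermitian_spectral_diag_real hAC.
set P := spectralmx AC in eAC; set sp := spectral_diag AC in eAC spR.
pose cs := undup [seq sp 0 i | i <- enum 'I_n.+1].
have csR : forall c, c \in cs -> c \is Num.real.
  move=> c; rewrite mem_undup => /mapP [i _ ->].
  by move/mxOverP: spR => /(_ 0 i).
exists [seq complex.Re c | c <- cs].
  rewrite map_inj_in_uniq ?undup_uniq // => x y xR yR eq.
  by rewrite -(RRe_real (csR _ xR)) -(RRe_real (csR _ yR)) eq.
apply/eqP; rewrite -(map_mx_eq0 f) map_horner_mx rmorph_prod /=.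
rewrite (eq_bigr (fun r => 'X - (f r)%:P)); last by move=> r _; rewrite map_polyXsubC.
rewrite big_map.
rewrite (eq_big_seq (fun c => 'X - c%:P)); last first.
  by move=> c /csR cR; rewrite /f RRe_real.
rewrite -/AC eAC horner_mx_uconjC ?spectral_unit // horner_mx_diag.
apply/eqP.
suff -> : diag_mx (map_mx (horner (\prod_(c <- cs) ('X - c%:P))) sp) = 0.
  by rewrite mulmx0 mul0mx.
apply/matrixP => k l; rewrite !mxE.
case: (k == l); last by rewrite mulr0n.
rewrite mulr1n; apply/eqP; rewrite -/(root _ _) root_prod_XsubC mem_undup.
by apply/mapP; exists k; rewrite ?mem_enum.
Qed.

Section Aux.
Variable R : realType.
Implicit Types (n : nat).




Lemma dotvE n (u v : 'cV[R]_n) : dotv u v = \sum_i u i 0 * v i 0.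
Proof. by rewrite /dotv mxE; apply: eq_bigr => i _; rewrite mxE. Qed.

Lemma dotvC n (u v : 'cV[R]_n) : dotv u v = dotv v u.
Proof. by rewrite !dotvE; apply: eq_bigr => i _; rewrite mulrC. Qed.

Lemma dotv_ge0 n (u : 'cV[R]_n) : 0 <= dotv u u.
Proof. by rewrite dotvE; apply: sumr_ge0 => i _; rewrite -expr2 sqr_ge0. Qed.

Lemma dotv_eq0 n (u : 'cV[R]_n) : dotv u u = 0 -> u = 0.
Proof.
rewrite dotvE => /eqP; rewrite psumr_eq0; last by move=> i _; rewrite -expr2 sqr_ge0.
move=> /allP H; apply/matrixP => i j; rewrite ord1 mxE.
have := H i; rewrite mem_index_enum => /(_ isT); rewrite -expr2 sqrf_eq0.
by move/eqP.
Qed.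

Lemma dotv_gt0 n (u : 'cV[R]_n) : u != 0 -> 0 < dotv u u.
Proof.
move=> nz; rewrite lt_def dotv_ge0 andbT; apply/eqP => /dotv_eq0 h.
by rewrite h eqxx in nz.
Qed.

Lemma dotv_mulmx n (u w : 'cV[R]_n) (M : 'M[R]_n) :
  dotv u (M *m w) = dotv (M^T *m u) w.
Proof. by rewrite /dotv trmx_mul trmxK mulmxA. Qed.

Lemma dotvDr n (u v w : 'cV[R]_n) : dotv u (v + w) = dotv u v + dotv u w.
Proof. by rewrite /dotv mulmxDr mxE. Qed.

Lemma dotvZr n (u v : 'cV[R]_n) a : dotv u (a *: v) = a * dotv u v.
Proof. by rewrite /dotv -scalemxAr mxE. Qed.

Lemma dotv0l n (v : 'cV[R]_n) : dotv 0 v = 0.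
Proof. by rewrite /dotv trmx0 mul0mx mxE. Qed.

Lemma dotv0r n (v : 'cV[R]_n) : dotv v 0 = 0.
Proof. by rewrite /dotv mulmx0 mxE. Qed.

Lemma mulmx_entry n (A B : 'M[R]_n) i j :
  (A *m B) i j = dotv (row i A)^T (col j B).
Proof.
rewrite dotvE mxE; apply: eq_bigr => k _; by rewrite !mxE.
Qed.

Lemma psd_sym n (S : 'M[R]_n) : psdmx S -> S^T = S. Proof. by case. Qed.

Lemma spd_psd n (S : 'M[R]_n) : spdmx S -> psdmx S.
Proof.
case=> sS pS; split => // v; have [->|nz] := eqVneq v 0.
  by rewrite mulmx0 dotv0r.
exact/ltW/pS.
Qed.

Lemma sym_unit_ker n (S : 'M[R]_n) : S^T = S ->
  (forall v : 'cV[R]_n, S *m v = 0 -> v = 0) -> S \in unitmx.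
Proof.
move=> sS H; rewrite -row_free_unit -kermx_eq0; apply/eqP/row_matrixP => i.
rewrite row0.
have : row i (kermx S) *m S = 0 by rewrite -row_mul mulmx_ker row0.
move=> /(congr1 trmx); rewrite trmx_mul sS trmx0 => /H /(congr1 trmx).
by rewrite trmxK trmx0.
Qed.

Lemma spd_unit n (S : 'M[R]_n) : spdmx S -> S \in unitmx.
Proof.
case=> sS pS; apply: sym_unit_ker => // v Sv; apply/eqP; apply/negPn/negP => nz.
by have := pS v nz; rewrite Sv dotv0r ltxx.
Qed.

Lemma invmx_mul n (A B : 'M[R]_n) : A \in unitmx -> B \in unitmx ->
  invmx (A *m B) = invmx B *m invmx A.
Proof.
move=> uA uB; have uAB : A *m B \in unitmx by rewrite unitmx_mul uA uB.
have e : (A *m B) *m (invmx B *m invmx A) = 1%:M.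
  by rewrite mulmxA mulmxK // mulmxV.
by rewrite -[LHS]mulmx1 -e mulmxA mulVmx // mul1mx.
Qed.

Lemma inv_sym n (S : 'M[R]_n) : S^T = S -> (invmx S)^T = invmx S.
Proof. by move=> sS; rewrite trmx_inv sS. Qed.

Lemma psd_inv n (S : 'M[R]_n) : psdmx S -> S \in unitmx -> psdmx (invmx S).
Proof.
case=> sS pS uS; split; first exact: inv_sym.
by move=> v; rewrite -{1}(mulKVmx uS v) dotvC; apply: pS.
Qed.

Lemma psd_congr n (S K : 'M[R]_n) : psdmx S -> K^T = K -> psdmx (K *m S *m K).
Proof.
case=> sS pS sK; split.
  by rewrite /symmx !trmx_mul sK sS mulmxA.
by move=> v; rewrite -!mulmxA dotv_mulmx sK pS.
Qed.





Lemma horner_mx_XsubC n (A : 'M[R]_n.+1) r : horner_mx A ('X - r%:P) = A - r%:M.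
Proof. by rewrite rmorphB /= horner_mx_X horner_mx_C. Qed.

Lemma horner_eig n (A : 'M[R]_n.+1) (v : 'rV_n.+1) a p :
  v *m A = a *: v -> v *m horner_mx A p = p.[a] *: v.
Proof.
move=> vA; elim/poly_ind: p => [|p c IH].
  by rewrite rmorph0 mulmx0 horner0 scale0r.
rewrite rmorphD rmorphM /= horner_mx_X horner_mx_C hornerMXaddC.
rewrite mulmxDr mul_mx_scalar.
rewrite -[horner_mx A p * A]/(horner_mx A p *m A) mulmxA IH -scalemxAl vA scalerA scalerDl.
done.
Qed.

Lemma eig_in_rs n (A : 'M[R]_n.+1) rs a :
  horner_mx A (\prod_(r <- rs) ('X - r%:P)) = 0 -> eigenvalue A a -> a \in rs.
Proof.
move=> h /eigenvalueP [v vA nz].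
have := horner_eig (\prod_(r <- rs) ('X - r%:P)) vA.
rewrite h mulmx0 => /esym/eqP; rewrite scaler_eq0 (negPf nz) orbF.
by rewrite -/(root _ _) root_prod_XsubC.
Qed.

Lemma eig_ge0 n (A : 'M[R]_n) a : psdmx A -> eigenvalue A a -> 0 <= a.
Proof.
case=> sA pA /eigenvalueP [v vA nz].
have vnz : v^T != 0 by apply: contra nz => /eqP/(congr1 trmx); rewrite trmxK trmx0 => ->.
have := pA v^T.
have -> : A *m v^T = a *: v^T.
  by have sA' : A^T = A := sA; rewrite -sA' -trmx_mul vA linearZ.
rewrite dotvZr; have := dotv_gt0 vnz.
by move=> h; rewrite pmulr_lge0.
Qed.

Lemma annih_eig n (A : 'M[R]_n.+1) : A^T = A ->
  exists rs : seq R, [/\ uniq rs,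
    horner_mx A (\prod_(r <- rs) ('X - r%:P)) = 0 &
    forall r, r \in rs -> eigenvalue A r].
Proof.
move=> sA; have [rs0 u0 h0] := @sym_annih _ n A sA.
exists [seq r <- rs0 | eigenvalue A r]; split.
- exact: filter_uniq.
- move: h0; rewrite (bigID (eigenvalue A)) /= rmorphM /= -big_filter.
  set X := horner_mx A _; set Y := horner_mx A _.
  have uY' : forall t : seq R,
      \prod_(j <- t | ~~ eigenvalue A j) horner_mx A ('X - j%:P) \in unitmx.
    elim => [|r t IH]; first by rewrite big_nil unitmx1.
    rewrite big_cons; case: ifP => // ne.
    change (horner_mx A ('X - r%:P) *m \prod_(j <- t | ~~ eigenvalue A j) horner_mx A ('X - j%:P) \in unitmx).
    rewrite unitmx_mul IH andbT horner_mx_XsubC.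
    by rewrite -row_free_unit -kermx_eq0; move: ne; rewrite /eigenvalue /eigenspace negbK.
  have uY : Y \in unitmx by rewrite /Y rmorph_prod; apply: uY'.
  move=> h; rewrite -[X](mulmxK uY).
  change (X * Y = 0) in h; by rewrite [X *m Y]h mul0mx.
- by move=> r; rewrite mem_filter => /andP[].
Qed.

Lemma interp (rs : seq R) (f : R -> R) : uniq rs ->
  exists s : {poly R}, forall r, r \in rs -> s.[r] = f r.
Proof.
elim: rs => [|a t IH] /=; first by move=> _; exists 0.
move=> /andP [a_t ut]; have [s hs] := IH ut.
pose q := \prod_(r <- t) ('X - r%:P).
have qa : q.[a] != 0 by rewrite -/(root _ _) root_prod_XsubC.
exists (s + ((f a - s.[a]) / q.[a]) *: q) => r; rewrite inE => /orP [/eqP ->|rt].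
  by rewrite hornerD hornerZ divfK // addrC subrK.
have : root q r by rewrite root_prod_XsubC.
by move=> /eqP qr; rewrite hornerD hornerZ qr mulr0 addr0 hs.
Qed.

Lemma tr_horner n (A : 'M[R]_n.+1) p : (horner_mx A p)^T = horner_mx A^T p.
Proof.
elim/poly_ind: p => [|p c IH]; first by rewrite !rmorph0 trmx0.
rewrite !rmorphD !rmorphM /= !horner_mx_X !horner_mx_C.
change ((horner_mx A p *m A + c%:M)^T = horner_mx A^T p *m A^T + c%:M).
rewrite linearD /= tr_scalar_mx trmx_mul IH; congr (_ + _).
by apply/esym/comm_horner_mx.
Qed.

Lemma sym_horner n (A : 'M[R]_n.+1) p : A^T = A -> (horner_mx A p)^T = horner_mx A p.
Proof. by move=> sA; rewrite tr_horner sA. Qed.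

Lemma horner_mx_comp n (A : 'M[R]_n.+1) p q :
  horner_mx A (p \Po q) = horner_mx (horner_mx A q) p.
Proof.
elim/poly_ind: p => [|p c IH]; first by rewrite comp_poly0 !rmorph0.
rewrite comp_polyD comp_polyM comp_polyX comp_polyC !rmorphD !rmorphM /= IH.
by rewrite !horner_mx_C horner_mx_X.
Qed.





Lemma horner_mx_dvd n (A : 'M[R]_n.+1) (m q : {poly R}) :
  horner_mx A m = 0 -> m %| q -> horner_mx A q = 0.
Proof. by move=> hm /dvdpP [k ->]; rewrite rmorphM /= hm mulr0. Qed.

Lemma sqrt_ex n (H : 'M[R]_n.+1) : psdmx H -> exists p : {poly R},
  [/\ psdmx (horner_mx H p), horner_mx H p *m horner_mx H p = H &
      forall Q, psdmx Q -> Q *m Q = H -> Q = horner_mx H p].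
Proof.
move=> psdH; have [sH pH] := psdH.
have [rs [urs hrs ers]] := annih_eig sH.
have [s hs] := interp (fun r => Num.sqrt (Num.sqrt r)) urs.
set S := horner_mx H s.
have sS : S^T = S := sym_horner s sH.
have ss x : 0 <= x -> Num.sqrt (Num.sqrt x) * Num.sqrt (Num.sqrt x) = Num.sqrt x.
  by move=> x0; rewrite -expr2 sqr_sqrtr // sqrtr_ge0.
have ss2 x : 0 <= x -> Num.sqrt x * Num.sqrt x = x.
  by move=> x0; rewrite -expr2 sqr_sqrtr.
have PE : horner_mx H (s * s) = S *m S by rewrite rmorphM.
exists (s * s); rewrite PE; split.
- split; first by rewrite /symmx trmx_mul sS.
  by move=> v; rewrite -mulmxA dotv_mulmx sS dotv_ge0.
- have dv : \prod_(r <- rs) ('X - r%:P) %| s * s * (s * s) - 'X.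
    apply: uniq_roots_dvdp; last by rewrite uniq_rootsE.
    apply/allP => r rin; have r0 := eig_ge0 psdH (ers r rin).
    by rewrite /root hornerD hornerN hornerX !hornerM hs // ss // ss2 // subrr.
  have := horner_mx_dvd hrs dv.
  rewrite rmorphB /= horner_mx_X => /eqP; rewrite subr_eq0 => /eqP <-.
  by rewrite rmorphM /= -PE.
- move=> Q psdQ QQ; have [sQ pQ] := psdQ.
  have [ts [uts hts ets]] := annih_eig sQ.
  pose u := (s \Po ('X * 'X)) * (s \Po ('X * 'X)).
  have dv : \prod_(r <- ts) ('X - r%:P) %| u - 'X.
    apply: uniq_roots_dvdp; last by rewrite uniq_rootsE.
    apply/allP => t tin; have t0 := eig_ge0 psdQ (ets t tin).
    have tt : t * t \in rs.
      apply: (eig_in_rs hrs); move: (ets t tin) => /eigenvalueP [v vQ nz].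
      apply/eigenvalueP; exists v => //.
      by rewrite -QQ mulmxA vQ -scalemxAl vQ scalerA.
    rewrite /root /u !hornerE !horner_comp !hornerE hs // ss ?mulr_ge0 //.
    by rewrite -expr2 sqrtr_sqr ger0_norm // subrr.
  have := horner_mx_dvd hts dv.
  rewrite rmorphB /= horner_mx_X => /eqP; rewrite subr_eq0 => /eqP <-.
  rewrite rmorphM /= horner_mx_comp rmorphM /= horner_mx_X.
  by rewrite [Q * Q]QQ.
Qed.

Lemma psd_sqrtE n (H : 'M[R]_n.+1) : psdmx H -> exists p : {poly R},
  psd_sqrt H = horner_mx H p /\ psdmx (psd_sqrt H) /\ psd_sqrt H *m psd_sqrt H = H /\
  (forall Q, psdmx Q -> Q *m Q = H -> Q = psd_sqrt H).
Proof.
move=> psdH; have [p [h1 h2 h3]] := sqrt_ex psdH.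
have e : psd_sqrt H = horner_mx H p.
  rewrite /psd_sqrt; apply: xget_unique; first by split.
  by move=> Q [] /h3; apply.
exists p; rewrite e; split => //; split => //; split => //.
Qed.





Lemma psd_diag n (N : 'M[R]_n.+1) : psdmx N -> exists D : 'rV[R]_n.+1,
  [/\ forall i, 0 <= D 0 i, \det N = \prod_i D 0 i & \tr N = \sum_i D 0 i].
Proof.
move=> psdN; have [sN pN] := psdN.
have [rs [urs hrs ers]] := annih_eig sN.
have dg : diagonalizable N.
  by apply/diagonalizableP; exists rs => //; apply: mxminpoly_min.
case: dg => P uP /diagonalizable_forPex [D hD].
have e2 : P *m N = diag_mx D *m P by move/(simmxP uP): hD.
have e : P *m N *m invmx P = diag_mx D by rewrite e2 mulmxK.
exists D; split.
- move=> i; apply: (eig_ge0 psdN); apply/eigenvalueP; exists (row i P).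
    by rewrite -row_mul e2 row_mul row_diag_mx -scalemxAl -rowE.
  apply/negP => /eqP r0.
  have : row i (P *m invmx P) = 0 by rewrite row_mul r0 mul0mx.
  rewrite mulmxV // row1 => /matrixP /(_ 0 i); rewrite !mxE eqxx /=.
  by rewrite eqxx => /eqP; rewrite oner_eq0.
- rewrite -det_diag -e !det_mulmx det_inv mulrC mulrA mulVf ?mul1r //.
  by rewrite -unitfE -unitmxE.
- by rewrite -mxtrace_diag -e mxtrace_mulC mulmxA mulVmx ?mul1mx.
Qed.

Lemma psd_unit_det n (N : 'M[R]_n) : psdmx N -> N \in unitmx -> 0 < \det N.
Proof.
case: n N => [|n] N psdN uN; first by rewrite det_mx00 ltr01.
have [D [D0 dD _]] := psd_diag psdN.
rewrite lt_def dD -dD.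
have -> : \det N != 0 by rewrite -unitfE -unitmxE.
by rewrite /= dD; apply: prodr_ge0 => i _.
Qed.

Lemma logdet_le n (N : 'M[R]_n) : psdmx N -> N \in unitmx ->
  ln (\det N) <= \tr N - n%:R.
Proof.
case: n N => [|n] N psdN uN.
  by rewrite det_mx00 ln1 /mxtrace big_ord0 subrr.
have [D [D0 dD tD]] := psd_diag psdN.
have Dp i : 0 < D 0 i.
  rewrite lt_def D0 andbT; apply/eqP => Di.
  have : \det N = 0 by rewrite dD (bigD1 i) //= Di mul0r.
  by move=> h; move: uN; rewrite unitmxE h unitr0.
rewrite dD tD [X in _ - X](_ : _ = \sum_(i < n.+1) (1:R)); last by rewrite sumr_const card_ord.
rewrite -sumrB.
pose P (x y : R) := 0 < x /\ ln x <= y.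
suff : P (\prod_i D 0 i) (\sum_i (D 0 i - 1)) by case.
apply: (big_rec2 P); first by split; [exact: ltr01 | rewrite ln1].
move=> i x y _ [x0 lxy]; split; first by rewrite mulr_gt0.
rewrite lnM ?posrE //; apply: lerD => //.
have h := @le_ln1Dx R (D 0 i - 1); rewrite (addrC 1 (D 0 i - 1)) subrK in h; apply: h.
by rewrite ltrBrDl subrr.
Qed.

Lemma logdet2 n (X Y : 'M[R]_n) : psdmx X -> X \in unitmx ->
  psdmx Y -> Y \in unitmx ->
  ln (\det Y) - ln (\det X) <= \tr (invmx X *m Y) - n%:R.
Proof.
case: n X Y => [|n] X Y psdX uX psdY uY.
  by rewrite !det_mx00 ln1 subrr /mxtrace big_ord0 subrr.
have psdXi := psd_inv psdX uX.
have [p [_ [psdK [KK _]]]] := psd_sqrtE psdXi.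
set K := psd_sqrt _ in psdK KK.
have sK : K^T = K by case: psdK.
have uK : K \in unitmx.
  by move: (unitmx_inv X); rewrite uX -KK unitmx_mul => /andP[].
have psdN := psd_congr psdY sK.
have uN : K *m Y *m K \in unitmx by rewrite !unitmx_mul uK uY.
have := logdet_le psdN uN.
rewrite mxtrace_mulC mulmxA KK !det_mulmx.
have -> : \det K * \det Y * \det K = \det Y * \det (invmx X).
  by rewrite -KK det_mulmx [\det K * \det Y]mulrC -mulrA.
rewrite det_inv lnM ?posrE ?invr_gt0 ?psd_unit_det // lnV ?posrE ?psd_unit_det //.
Qed.





Lemma ot_exists_unique n (Sg S : 'M[R]_n.+1) : spdmx Sg -> spdmx S ->
  exists B, [/\ psdmx B, B *m Sg *m B = S &
    forall B', psdmx B' -> B' *m Sg *m B' = S -> B' = B].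
Proof.
move=> spdSg spdS; have psdSg := spd_psd spdSg; have psdS := spd_psd spdS.
have uSg := spd_unit spdSg.
have [p [_ [psdK [KK _]]]] := psd_sqrtE psdSg.
set K := psd_sqrt Sg in psdK KK.
have sK : K^T = K by case: psdK.
have uK : K \in unitmx by move: uSg; rewrite -KK unitmx_mul => /andP[].
set Ki := invmx K.
have sKi : Ki^T = Ki by apply: inv_sym.
have psdM := psd_congr psdS sK.
have [q [_ [psdQ [QQ uQ]]]] := psd_sqrtE psdM.
set Q := psd_sqrt _ in psdQ QQ uQ.
exists (Ki *m Q *m Ki); split.
- exact: psd_congr.
- rewrite -KK !mulmxA mulmxKV // mulmxK // -(mulmxA Ki Q Q) QQ !mulmxA.
  by rewrite mulVmx // mul1mx mulmxK.
- move=> B' psdB' e.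
  have psdW := psd_congr psdB' sK.
  have WW : K *m B' *m K *m (K *m B' *m K) = K *m S *m K.
    by rewrite -e -KK !mulmxA.
  have := uQ _ psdW WW; rewrite -/Q => <-.
  by rewrite !mulmxA mulVmx // mul1mx mulmxK.
Qed.




Lemma ln_det3 n (B S : 'M[R]_n) : psdmx B -> B \in unitmx -> psdmx S -> S \in unitmx ->
  ln (\det (B *m S *m B)) = 2 * ln (\det B) + ln (\det S).
Proof.
move=> pB uB pS uS; have dB := psd_unit_det pB uB; have dS := psd_unit_det pS uS.
rewrite !det_mulmx !lnM ?posrE ?mulr_gt0 //; lra.
Qed.

Lemma part1 d (nu mu0 mu1 : gauss R d) (T0 T1 : affmap R d) :
     inBW nu -> inBW mu0 -> inBW mu1 ->
     is_ot_map nu mu0 T0 -> is_ot_map nu mu1 T1 ->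
     entropy mu0 + gauss_inner nu (aff_comp (gradH mu0) T0) (aff_sub T1 T0)
       <= entropy mu1.
Proof.
case: nu mu0 mu1 T0 T1 => [mn Sn] [m0 S0] [m1 S1] [B0 b0] [B1 b1].
rewrite /inBW /is_ot_map /gcov /gmean /aff_app /=.
move=> spdSn spdS0 spdS1 [pB0 [e0 em0]] [pB1 [e1 em1]].
have sB0 : B0^T = B0 by case: pB0.
have sB1 : B1^T = B1 by case: pB1.
rewrite sB0 in e0; rewrite sB1 in e1.
have uSn := spd_unit spdSn; have uS0 := spd_unit spdS0; have uS1 := spd_unit spdS1.
have pSn := spd_psd spdSn.
have uB0 : B0 \in unitmx by move: uS0; rewrite -e0 !unitmx_mul => /andP[/andP[]].
have uB1 : B1 \in unitmx by move: uS1; rewrite -e1 !unitmx_mul => /andP[/andP[]].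
have l0 : ln (\det S0) = 2 * ln (\det B0) + ln (\det Sn) by rewrite -e0 ln_det3.
have l1 : ln (\det S1) = 2 * ln (\det B1) + ln (\det Sn) by rewrite -e1 ln_det3.
have key := logdet2 pB0 uB0 pB1 uB1.
rewrite /entropy /gauss_inner /gcov /gmean /gradH /aff_comp /aff_sub /aff_app /=.
have -> : (- invmx S0 *m B0) *m mn + (- invmx S0 *m b0 + invmx S0 *m m0) = 0.
  rewrite -em0 mulmxDr !mulNmx mulmxA.
  set a := invmx S0 *m B0 *m mn; set c := invmx S0 *m b0.
  by rewrite (addrC a c) addKr addNr.
rewrite dotv0l add0r.
have -> : (- invmx S0 *m B0)^T = - (invmx Sn *m invmx B0).
  rewrite mulNmx linearN /= trmx_mul sB0 trmx_inv -e0 !trmx_mul sB0 (psd_sym pSn).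
  rewrite !invmx_mul ?unitmx_mul ?uB0 ?uSn // !mulmxA mulmxV // mul1mx.
  done.
rewrite mulNmx mulNmx raddfN /= -mulmxA mxtrace_mulC.
rewrite mulmxA mulmxK // mulmxBl raddfB /= mulmxV // mxtrace1 l0 l1.
rewrite mxtrace_mulC in key.
lra.
Qed.




Lemma ot_map_spec n (mu nu : gauss R n.+1) : inBW mu -> inBW nu ->
  [/\ is_ot_map mu nu (ot_map mu nu),
      (ot_map mu nu).1 *m gcov mu *m (ot_map mu nu).1 = gcov nu &
      forall B, psdmx B -> B *m gcov mu *m B = gcov nu -> B = (ot_map mu nu).1].
Proof.
case: mu nu => [m S] [m' S']; rewrite /inBW /gcov /= => hS hS'.
have [B [pB eB uB]] := ot_exists_unique hS hS'.
have sB : B^T = B by case: pB.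
have ex : is_ot_map (m, S) (m', S') (B, m' - B *m m).
  split => //; split; first by rewrite /gcov /= sB.
  by rewrite /aff_app /gmean /= addrC subrK.
have h := xgetPex (aff_id R n.+1) (ex_intro _ _ ex).
rewrite -/(ot_map _ _) in h.
have [pT [eT _]] : is_ot_map (m, S) (m', S') (ot_map (m, S) (m', S')) := h.
have sT : (ot_map (m, S) (m', S')).1^T = (ot_map (m, S) (m', S')).1 by case: pT.
rewrite sT in eT.
have -> : (ot_map (m, S) (m', S')).1 = B by apply: uB.
by split; [exact: h | exact: eB | exact: uB].
Qed.

Lemma W2E n (mu nu : gauss R n.+1) : inBW mu -> inBW nu ->
  W2sq mu nu = dotv (gmean nu - gmean mu) (gmean nu - gmean mu) +
  \tr (((ot_map mu nu).1 - 1%:M) *m ((ot_map mu nu).1 - 1%:M) *m gcov mu).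
Proof.
move=> hmu hnu; have [[pT [_ mT]] _ _] := ot_map_spec hmu hnu.
have sT : (ot_map mu nu).1^T = (ot_map mu nu).1 by case: pT.
rewrite /W2sq /gauss_inner /aff_sub /aff_id /=; congr (_ + _).
  congr (dotv _ _); rewrite /aff_app /= -mT mulmxBl mul1mx subr0;
  by rewrite addrAC.
by rewrite [((ot_map mu nu).1 - 1%:M)^T]linearB /= sT tr_scalar_mx.
Qed.

Lemma trace_quad n (X S : 'M[R]_n) : X^T = X ->
  \tr (X *m S *m X) = \sum_j dotv (col j X) (S *m col j X).
Proof.
move=> sX; rewrite /mxtrace; apply: eq_bigr => j _.
rewrite -mulmxA dotvE mxE; apply: eq_bigr => k _.
rewrite !mxE; congr (_ * _).
  by rewrite -[in LHS]sX mxE.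
by apply: eq_bigr => l _; rewrite !mxE.
Qed.




Lemma quad_ge0 n (X S : 'M[R]_n) : psdmx S -> X^T = X -> 0 <= \tr (X *m S *m X).
Proof.
case=> _ pS sX; rewrite trace_quad //; apply: sumr_ge0 => j _; exact: pS.
Qed.

Lemma quad_eq0 n (X S : 'M[R]_n) : spdmx S -> X^T = X -> \tr (X *m S *m X) = 0 -> X = 0.
Proof.
move=> spdS sX; have [_ pS] := spd_psd spdS; rewrite trace_quad // => /eqP.
rewrite psumr_eq0; last by move=> j _; exact: pS.
move=> /allP H; apply/matrixP => i j; rewrite mxE.
have : col j X = 0.
  apply/eqP/negPn/negP => nz; have := (spdS.2 _ nz).
  have := H j; rewrite mem_index_enum => /(_ isT) /eqP ->; by rewrite ltxx.
by move/matrixP/(_ i 0); rewrite !mxE.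
Qed.

Lemma trace_sq n (X Y S : 'M[R]_n) : X^T = X -> Y^T = Y -> S^T = S ->
  \tr ((X + Y) *m (X + Y) *m S) = \tr (Y *m Y *m S)
    + \tr (X *m S *m X) + 2 * \tr (Y *m S *m X).
Proof.
move=> sX sY sS.
have t1 : \tr (X *m X *m S) = \tr (X *m S *m X) by rewrite -mulmxA mxtrace_mulC.
have t2 : \tr (X *m Y *m S) = \tr (Y *m S *m X) by rewrite -mulmxA mxtrace_mulC.
have t3 : \tr (Y *m X *m S) = \tr (Y *m S *m X).
  by rewrite -mxtrace_tr !trmx_mul sX sY sS mulmxA mxtrace_mulC mulmxA.
rewrite mulmxDl !mulmxDr !mulmxDl !raddfD /= t1 t2 t3; lra.
Qed.

Lemma trace_split n (B A S : 'M[R]_n) : B^T = B -> A^T = A -> S^T = S ->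
  \tr ((B - 1%:M) *m (B - 1%:M) *m S) = \tr ((A - 1%:M) *m (A - 1%:M) *m S)
    + \tr ((B - A) *m S *m (B - A)) + 2 * \tr ((A - 1%:M) *m S *m (B - A)).
Proof.
move=> sB sA sS.
have sX : (B - A)^T = B - A by rewrite [(B - A)^T]linearB /= sB sA.
have sY : (A - 1%:M)^T = A - 1%:M by rewrite [(A - 1%:M)^T]linearB /= sA trmx1.
rewrite -(trace_sq sX sY sS); congr (\tr (_ *m _ *m _)); by rewrite addrA subrK.
Qed.

Lemma entropyE n (mu : gauss R n) : entropy mu =
  - (n%:R / 2) * (ln (2 * pi) + 1) - (1 / 2) * ln (\det (gcov mu)).
Proof. by []. Qed.

Lemma part2 n (eta : R) (m : 'cV[R]_n.+1) (Sigma : 'M[R]_n.+1) :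
     0 < eta -> spdmx Sigma ->
     let Sigma1 := 2^-1 *: (Sigma + (2 * eta)%:M
                     + psd_sqrt (Sigma *m (Sigma + (4 * eta)%:M))) in
     let F := fun nu : gauss R n.+1 =>
                eta * entropy nu + 2^-1 * W2sq (m, Sigma) nu in
     inBW ((m, Sigma1) : gauss R n.+1)
     /\ (forall nu : gauss R n.+1, inBW nu -> F (m, Sigma1) <= F nu)
     /\ (forall nu : gauss R n.+1, inBW nu ->
           (forall nu' : gauss R n.+1, inBW nu' -> F nu <= F nu') ->
           nu = (m, Sigma1)).
Proof.
move=> eta0 spdS Sigma1 F.
have pS := spd_psd spdS; have sS : Sigma^T = Sigma by case: pS.
have uS := spd_unit spdS.
set H := Sigma *m (Sigma + (4 * eta)%:M).
have eH : H = Sigma *m Sigma + (4 * eta) *: Sigma by rewrite /H mulmxDr mul_mx_scalar.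
have cSH : Sigma *m H = H *m Sigma.
  by rewrite eH mulmxDr mulmxDl -scalemxAr -scalemxAl !mulmxA.
have psdH : psdmx H.
  split.
    rewrite /symmx /H trmx_mul [(Sigma + _)^T]linearD /= sS tr_scalar_mx.
    by rewrite mulmxDl mulmxDr scalar_mxC.
  move=> v; rewrite eH mulmxDl dotvDr -scalemxAl dotvZr -mulmxA dotv_mulmx sS.
  apply: addr_ge0.
    exact: dotv_ge0.
  apply: mulr_ge0; first by rewrite mulr_ge0 // ltW.
  exact: pS.2.
have [p [eP [psdP [PP uP]]]] := psd_sqrtE psdH.
set P := psd_sqrt H in eP psdP PP uP.
have sP : P^T = P by case: psdP.
have cSP : Sigma *m P = P *m Sigma by rewrite eP; apply: comm_mx_horner.
set Si := invmx Sigma.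
have cSiP : Si *m P = P *m Si.
  have := congr1 (fun M => Si *m M *m Si) cSP.
  by rewrite !mulmxA mulVmx // mul1mx -[Si *m P *m Sigma *m Si]mulmxA mulmxV // mulmx1.
have psdSi := psd_inv pS uS.
have [q [eK [psdK [KK _]]]] := psd_sqrtE psdSi.
set K := psd_sqrt Si in eK psdK KK.
have sK : K^T = K by case: psdK.
have cKP : P *m K = K *m P by rewrite eK; apply: comm_mx_horner.
set Y := Si *m P.
have psdY : psdmx Y.
  have := psd_congr psdP sK.
  by rewrite -mulmxA cKP mulmxA KK.
have sY : Y^T = Y by case: psdY.
set A1 := 2^-1 *: (1%:M + Y).
have psdA1 : psdmx A1.
  split.
    by rewrite /symmx /A1 linearZ /= linearD /= trmx1 sY.
  move=> v; rewrite /A1 -scalemxAl dotvZr mulmxDl mul1mx dotvDr.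
  by rewrite mulr_ge0 ?invr_ge0 ?ler0n // addr_ge0 ?dotv_ge0 //; apply: psdY.2.
have YS : Y *m Sigma = P by rewrite /Y -mulmxA -cSP mulmxA mulVmx // mul1mx.
have SY : Sigma *m Y = P by rewrite /Y mulmxA mulmxV // mul1mx.
have YSY : Y *m Sigma *m Y = Sigma + (4 * eta)%:M.
  by rewrite YS /Y mulmxA -cSiP -mulmxA PP /H mulmxA mulVmx // mul1mx.
have A1SA1 : A1 *m Sigma *m A1 = Sigma1.
  rewrite /A1 -scalemxAl -scalemxAr -scalemxAl scalerA mulmxDl mul1mx mulmxDr mulmx1.
  rewrite mulmxDl SY YSY YS /Sigma1.
  apply/matrixP => i j; rewrite !mxE; case: (i == j);
    rewrite ?mulr1n ?mulr0n; lra.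
have SA1 : Sigma *m A1 = 2^-1 *: (Sigma + P).
  by rewrite /A1 -scalemxAr mulmxDr mulmx1 SY.
have spdS1 : spdmx Sigma1.
  split.
    rewrite /symmx /Sigma1 -/H -/P linearZ /= !linearD /= sS sP tr_scalar_mx //.
  move=> v nz; rewrite /Sigma1 -/H -/P -scalemxAl dotvZr !mulmxDl !dotvDr.
  rewrite mul_scalar_mx dotvZr; apply: mulr_gt0; first by rewrite invr_gt0 ltr0n.
  have := dotv_gt0 nz; have := spdS.2 v nz; have := psdP.2 v; nra.
have uS1 := spd_unit spdS1.
have uA1 : A1 \in unitmx.
  by move: uS1; rewrite -A1SA1 !unitmx_mul => /andP[/andP[]].
have opt : (A1 - 1%:M) *m Sigma = eta *: invmx A1.
  have e : (A1 - 1%:M) *m Sigma *m A1 = eta%:M.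
    rewrite mulmxBl mul1mx mulmxBl A1SA1 SA1 /Sigma1 -/H -/P.
    apply/matrixP => i j; rewrite !mxE; case: (i == j);
      rewrite ?mulr1n ?mulr0n; lra.
  by rewrite -[LHS](mulmxK uA1) e mul_scalar_mx.
have hmu : inBW ((m, Sigma) : gauss R n.+1) := spdS.
have hmu1 : inBW ((m, Sigma1) : gauss R n.+1) := spdS1.
have B1E : (ot_map ((m, Sigma) : gauss R n.+1) (m, Sigma1)).1 = A1.
  have [_ _ u] := ot_map_spec hmu hmu1; by apply/esym/u.
have sA1 : A1^T = A1 by case: psdA1.
have ineq : forall nu : gauss R n.+1, inBW nu ->
    F (m, Sigma1) + 2^-1 * dotv (gmean nu - m) (gmean nu - m)
    + 2^-1 * \tr (((ot_map ((m, Sigma) : gauss R n.+1) nu).1 - A1) *m Sigma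
                    *m ((ot_map ((m, Sigma) : gauss R n.+1) nu).1 - A1)) <= F nu.
  move=> [m' S] hnu; have [[pB _] eB _] := ot_map_spec hmu hnu.
  rewrite /gcov /= in eB.
  set B := (ot_map _ _).1 in pB eB *.
  have sB : B^T = B by case: pB.
  have uB : B \in unitmx.
    by move: (spd_unit hnu); rewrite /gcov /= -eB !unitmx_mul => /andP[/andP[]].
  rewrite /F !W2E // B1E /gmean /gcov /= subrr dotv0l add0r !entropyE /gcov /=.
  rewrite -/B -eB -A1SA1 !ln_det3 //.
  rewrite (trace_split sB sA1 sS) -/B.
  have key := logdet2 psdA1 uA1 pB uB.
  have key2 := ler_wpM2l (ltW eta0) key.
  have tr_opt : \tr ((A1 - 1%:M) *m Sigma *m (B - A1)) = eta * (\tr (invmx A1 *m B) - n.+1%:R).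
    by rewrite opt -scalemxAl mxtraceZ mulmxBr raddfB /= mulVmx // mxtrace1.
  rewrite tr_opt; lra.
have sXnu : forall nu : gauss R n.+1, inBW nu ->
    ((ot_map ((m, Sigma) : gauss R n.+1) nu).1 - A1)^T
    = (ot_map ((m, Sigma) : gauss R n.+1) nu).1 - A1.
  move=> nu hnu; have [[pB _] _ _] := ot_map_spec hmu hnu.
  have sB : (ot_map ((m, Sigma) : gauss R n.+1) nu).1^T = (ot_map ((m, Sigma) : gauss R n.+1) nu).1 by case: pB.
  by rewrite [(_ - A1)^T]linearB /= sB sA1.
split; first exact: hmu1.
split.
  move=> nu hnu; have := ineq nu hnu; have := dotv_ge0 (gmean nu - m).
  have := quad_ge0 pS (sXnu nu hnu); lra.
move=> [m' S] hnu hmin.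
have h1 := hmin _ hmu1; have h2 := ineq _ hnu.
have q1 := dotv_ge0 (gmean ((m', S) : gauss R n.+1) - m).
have q2 := quad_ge0 pS (sXnu _ hnu).
have [[pB _] eB _] := ot_map_spec hmu hnu.
rewrite /gcov /= in eB.
have d0 : dotv (gmean ((m', S) : gauss R n.+1) - m) (gmean ((m', S) : gauss R n.+1) - m) = 0.
  by apply/eqP; rewrite eq_le q1 andbT; lra.
have t0 : \tr (((ot_map ((m, Sigma) : gauss R n.+1) (m', S)).1 - A1) *m Sigma
                    *m ((ot_map ((m, Sigma) : gauss R n.+1) (m', S)).1 - A1)) = 0.
  by apply/eqP; rewrite eq_le q2 andbT; lra.
have := dotv_eq0 d0; rewrite /gmean /= => /eqP; rewrite subr_eq0 => /eqP ->.
have := quad_eq0 spdS (sXnu _ hnu) t0 => /eqP; rewrite subr_eq0 => /eqP eB1.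
by rewrite -eB eB1 A1SA1.
Qed.


End Aux.

Unset Implicit Arguments.

Theorem mainTheorem10 (R : realType) :
  (* (i) *)
  (forall (d : nat) (nu mu0 mu1 : gauss R d) (T0 T1 : affmap R d),
     inBW nu -> inBW mu0 -> inBW mu1 ->
     is_ot_map nu mu0 T0 -> is_ot_map nu mu1 T1 ->
     entropy mu0 + gauss_inner nu (aff_comp (gradH mu0) T0) (aff_sub T1 T0)
       <= entropy mu1)
  /\
  (* (i), in particular (nu = mu0) *)
  (forall (d : nat) (mu0 mu1 : gauss R d) (T : affmap R d),
     inBW mu0 -> inBW mu1 -> is_ot_map mu0 mu1 T ->
     entropy mu0 + gauss_inner mu0 (gradH mu0) (aff_sub T (aff_id R d))
       <= entropy mu1)
  /\
  (* (ii) *)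
  (forall (d : nat) (eta : R) (m : 'cV[R]_d) (Sigma : 'M[R]_d),
     0 < eta -> spdmx Sigma ->
     let Sigma1 := 2^-1 *: (Sigma + (2 * eta)%:M
                     + psd_sqrt (Sigma *m (Sigma + (4 * eta)%:M))) in
     let F := fun nu : gauss R d =>
                eta * entropy nu + 2^-1 * W2sq (m, Sigma) nu in
     inBW ((m, Sigma1) : gauss R d)
     /\ (forall nu : gauss R d, inBW nu -> F (m, Sigma1) <= F nu)
     /\ (forall nu : gauss R d, inBW nu ->
           (forall nu' : gauss R d, inBW nu' -> F nu <= F nu') ->
           nu = (m, Sigma1))).
Proof.
split; first by move=> d nu mu0 mu1 T0 T1 *; apply: part1.
split.
  move=> d mu0 mu1 T h0 h1 hT.
  have hid : is_ot_map mu0 mu0 (aff_id R d).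
    case: mu0 {h0 h1 hT} => m S; split.
      split; first by rewrite /symmx trmx1.
      by move=> v; rewrite mul1mx dotv_ge0.
    by split; rewrite /gcov /gmean /aff_app /= ?trmx1 ?mul1mx ?mulmx1 ?addr0.
  have := part1 h0 h0 h1 hid hT.
  suff -> : aff_comp (gradH mu0) (aff_id R d) = gradH mu0 by [].
  by case: mu0 {h0 h1 hT hid} => m S; rewrite /aff_comp /gradH /aff_id /= mulmx1 mulmx0 add0r.
move=> d; case: d => [|n]; last exact: part2.
move=> eta m Sigma eta0 spdS Sigma1 F.
have all0 : forall nu : gauss R 0, nu = (m, Sigma1).
  by case=> a b; rewrite [a]flatmx0 [m]flatmx0 [b]flatmx0 [Sigma1]flatmx0.
split.
  split; first by rewrite /symmx /gcov /= !flatmx0.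
  by move=> v; rewrite [v]flatmx0 eqxx.
by split; move=> nu _; [rewrite (all0 nu) | move=> _; apply: all0].
Qed.
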